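(* A semiring $R$ is $k$-simple if and only if it is $k$-congruence-simple.
   Context: A semiring $(R,+,\cdot)$ is a set with two binary operations such that $(R,+)$ is a commutative semigroup, $(R,\cdot)$ is a semigroup, and multiplication distributes over addition from both sides; no additive neutral element or identity is assumed. An element $0\in R$ is a zero of $R$ if $0+r=r$ and $0r=r0=0$ for all $r\in R$. An ideal of $R$ is a nonempty subset $A\subseteq R$ with $a+b\in A$ and $ra,ar\in A$ for all $a,b\in A$, $r\in R$; the trivial ideals are $R$ and, if $R$ has a zero $0$, $\{0\}$. For an ideal $A$, its $k$-closure is $\overline{A}=\{x\in R\mid x+a=b \text{ for some } a,b\in A\}$, and $A$ is a $k$-ideal if $A=\overline{A}$. $R$ is $k$-simple if it has no $k$-ideals other than the trivial ideals. A congruence on $R$ is an equivalence relation $\equiv$ such that $a\equiv b$ implies $a+c\equiv b+c$, $ac\equiv bc$, $ca\equiv cb$ for all $a,b,c\in R$. For an ideal $A$, $\kappa_A$ is the congruence defined by $x\,\kappa_A\,y$ iff $x+a=y+b$ for some $a,b\in A$. A congruence $\theta$ is a $k$-congruence if $\theta=\kappa_A$ for some ideal $A$ of $R$. $R$ is $k$-congruence-simple if it has no $k$-congruences other than $R\times R$ and the identity relation $\mathrm{id}_R$. Throughout, $|R|\geq 2$. *)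

(* Defs.v *)
(* semirings in the paper's sense (no additive/multiplicative
   neutral assumed), given by a carrier type and two operations. Subsets and
   relations are predicates; set equality is pointwise <->. *)

Section SemiringDefs.
Context {R : Type} (add mul : R -> R -> R).

Definition is_semiring : Prop :=
  (forall x y z, add x (add y z) = add (add x y) z) /\
  (forall x y, add x y = add y x) /\
  (forall x y z, mul x (mul y z) = mul (mul x y) z) /\
  (forall x y z, mul x (add y z) = add (mul x y) (mul x z)) /\
  (forall x y z, mul (add x y) z = add (mul x z) (mul y z)).

Definition is_zero (z : R) : Prop :=
  forall r, add z r = r /\ mul z r = z /\ mul r z = z.

Definition is_ideal (A : R -> Prop) : Prop :=
  (exists a, A a) /\
  (forall a b, A a -> A b -> A (add a b)) /\
  (forall r a, A a -> A (mul r a) /\ A (mul a r)).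

Definition k_closure (A : R -> Prop) (x : R) : Prop :=
  exists a b, A a /\ A b /\ add x a = b.

Definition is_k_ideal (A : R -> Prop) : Prop :=
  is_ideal A /\ (forall x, A x <-> k_closure A x).

Definition trivial_ideal (A : R -> Prop) : Prop :=
  (forall x, A x) \/ (exists z, is_zero z /\ forall x, A x <-> x = z).

Definition k_simple : Prop :=
  forall A, is_k_ideal A -> trivial_ideal A.

Definition is_congruence (th : R -> R -> Prop) : Prop :=
  (forall x, th x x) /\
  (forall x y, th x y -> th y x) /\
  (forall x y z, th x y -> th y z -> th x z) /\
  (forall a b c, th a b ->
     th (add a c) (add b c) /\ th (mul a c) (mul b c) /\ th (mul c a) (mul c b)).

Definition kappa (A : R -> Prop) (x y : R) : Prop :=
  exists a b, A a /\ A b /\ add x a = add y b.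

Definition is_k_congruence (th : R -> R -> Prop) : Prop :=
  is_congruence th /\
  exists A, is_ideal A /\ (forall x y, th x y <-> kappa A x y).

Definition k_congruence_simple : Prop :=
  forall th, is_k_congruence th ->
    (forall x y, th x y) \/ (forall x y, th x y <-> x = y).

End SemiringDefs.

(* Main.v *)
Require Import Defs.

Lemma sub_cl {R : Type} (add mul : R -> R -> R) (A : R -> Prop) :
  is_ideal add mul A -> forall x, A x -> k_closure add A x.
Proof.
  intros [[a Ha] [Hadd _]] x Hx. exists a, (add x a). auto.
Qed.

Theorem theorem4p4 (R : Type) (add mul : R -> R -> R) :
  is_semiring add mul ->
  (exists x y : R, x <> y) ->
  (k_simple add mul <-> k_congruence_simple add mul).
Proof.
  intros [Aas [Acom [Mas [Ml Mr]]]] _.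
  assert (sw: forall x y z, add (add x y) z = add (add x z) y)
    by (intros; rewrite <- !Aas, (Acom y z); reflexivity).
  split.
  - intros Hks th [Hcong [A [HA Hth]]].
    set (B := k_closure add A).
    assert (HB : is_ideal add mul B).
    { destruct HA as [[a0 Ha0] [Hadd Hmul]].
      split; [|split].
      - exists a0. apply (sub_cl add mul A); [split; [exists a0; exact Ha0|split; auto]|]. exact Ha0.
      - intros x y [a [b [Ha [Hb E]]]] [c [d [Hc [Hd F]]]].
        exists (add a c), (add b d). split; [auto|split; [auto|]].
        rewrite Aas, <- (Aas x y a), (Acom y a), Aas, E, <- Aas, F. reflexivity.
      - intros r x [a [b [Ha [Hb E]]]]. split.
        + exists (mul r a), (mul r b).
          destruct (Hmul r a Ha), (Hmul r b Hb).
          repeat split; auto. rewrite <- Ml, E. reflexivity.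
        + exists (mul a r), (mul b r).
          destruct (Hmul r a Ha), (Hmul r b Hb).
          repeat split; auto. rewrite <- Mr, E. reflexivity. }
    assert (HkB : is_k_ideal add mul B).
    { split; [exact HB|]. intro x. split.
      - apply (sub_cl add mul B HB).
      - intros [u [v [[a [b [Ha [Hb E]]]] [[c [d [Hc [Hd F]]]] G]]]].
        destruct HA as [_ [Hadd _]].
        exists (add b c), (add d a). split; [auto|split; [auto|]].
        rewrite <- E, !Aas, G, sw, F. reflexivity. }
    assert (AB : forall x, A x -> B x) by (apply (sub_cl add mul A HA)).
    destruct (Hks B HkB) as [Hall | [z [Hz HBz]]].
    + left. intros x y. apply Hth.
      destruct (Hall x) as [a [b [Ha [Hb E]]]].
      destruct (Hall y) as [a' [b' [Ha' [Hb' F]]]].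
      destruct HA as [_ [Hadd _]].
      exists (add a b'), (add a' b). split; [auto|split; [auto|]].
      rewrite !Aas, E, F. apply Acom.
    + right. intros x y. split; intro Hxy; [apply Hth in Hxy|apply Hth]; revert Hxy.
      * intros [a [b [Ha [Hb E]]]].
        assert (a = z) by (apply HBz, AB, Ha).
        assert (b = z) by (apply HBz, AB, Hb).
        subst a b.
        destruct (Hz x) as [E1 _]. destruct (Hz y) as [E2 _].
        rewrite (Acom x z), (Acom y z), E1, E2 in E. exact E.
      * intros ->. destruct HA as [[a Ha] _].
        exists a, a. auto.
  - intros Hkc A [HA Hcl].
    assert (Hc : is_congruence add mul (kappa add A)).
    { destruct HA as [Hne [Hadd Hmul]].
      split; [|split; [|split]].
      - intro x. destruct Hne as [a Ha]. exists a, a. auto.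
      - intros x y [a [b [Ha [Hb E]]]]. exists b, a. auto.
      - intros x y w [a [b [Ha [Hb E]]]] [c [d [Hc [Hd F]]]].
        exists (add a c), (add d b). split; [auto|split; [auto|]].
        rewrite Aas, E, <- Aas, (Acom b c), Aas, F, Aas. reflexivity.
      - intros x y c [a [b [Ha [Hb E]]]]. split; [|split].
        + exists a, b. split; [auto|split; [auto|]].
          rewrite (sw x c a), (sw y c b), E. reflexivity.
        + exists (mul a c), (mul b c).
          destruct (Hmul c a Ha), (Hmul c b Hb).
          repeat split; auto. rewrite <- !Mr, E. reflexivity.
        + exists (mul c a), (mul c b).
          destruct (Hmul c a Ha), (Hmul c b Hb).
          repeat split; auto. rewrite <- !Ml, E. reflexivity. }
    destruct (Hkc (kappa add A)) as [Hall | Hid].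
    { split; [exact Hc|]. exists A. split; [exact HA|]. tauto. }
    + left. intro x. destruct HA as [[a0 Ha0] [Hadd _]].
      destruct (Hall x a0) as [a [b [Ha [Hb E]]]].
      apply Hcl. exists a, (add a0 b). auto.
    + right. destruct HA as [[z Hzz] [Hadd Hmul]].
      assert (Hab : forall a b, A a -> A b -> add a b = b).
      { intros a b Ha Hb. apply Hid. exists b, (add a b).
        split; [auto|split; [auto|]]. apply Acom. }
      assert (Huniq : forall a, A a -> a = z).
      { intros a Ha. rewrite <- (Hab z a Hzz Ha), Acom. apply Hab; auto. }
      exists z. split.
      * intro r. split; [|split].
        -- apply Hid. exists z, (add z z). split; [auto|split; [auto|]].
           rewrite (Acom z r), Aas. reflexivity.
        -- apply Huniq. apply (Hmul r z Hzz).
        -- apply Huniq. apply (Hmul r z Hzz).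
      * intro x. split; [apply Huniq|intros ->; exact Hzz].
Qed.
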